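(* Let $F$ be a complete posheaf on a locale $X$. The following are equivalent: (1) $F$ is a complete Heyting sheaf, i.e. $sup_F\circ\mu_F=m_F\circ(1_F\times sup_F)$ as morphisms $F\times\mathbb{P}F\to F$. (2) Each $F(u)$, $u\in\mathcal{O}(X)$, is a complete Heyting algebra (frame), and for all $v\le u$ in $\mathcal{O}(X)$, $x\in F(u)$, $y\in F(v)$: $x\wedge l_{v,u}(y)=l_{v,u}(x|_v\wedge y)$, where $l_{v,u}:F(v)\to F(u)$ is the left adjoint of the restriction map $F(u)\to F(v)$.
   Context: Let $X$ be a locale with frame of opens $\mathcal{O}(X)$. A posheaf on $X$ is a sheaf of sets $F$ with (POS1) each $F(u)$ a poset; (POS2) restriction maps $F(u)\to F(v)$, $x\mapsto x|_v$ ($v\le u$), order-preserving; (POS3) if $u=\bigvee_i u_i$ and $s,t\in F(u)$ satisfy $s|_{u_i}\le t|_{u_i}$ for all $i$, then $s\le t$. A posheaf $F$ is complete iff every $F(u)$ is a complete lattice and every restriction map $F(u)\to F(v)$ ($v\le u$) is surjective and has both a left and a right adjoint (equivalently, the principal ideal embedding into the sheaf of downsheaves has a left adjoint, adjointness taken with respect to the order on points $x\in F(u)$, $y\in F(w)$: $x\le y$ iff $u\le w$ and $x\le y|_u$). $\mathbb{P}F$ is the sheaf with $\mathbb{P}F(u)$ the set of subsheaves of $F^u$ (the restriction of $F$ to $\downarrow u$), with restriction $S\mapsto S^v$. For complete $F$, $sup_F:\mathbb{P}F\to F$ sends $S\in\mathbb{P}F(u)$ to the least $z\in F(u)$ with $S(v)\subseteq\{y\in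 F(v)\mid y\le z|_v\}$ for all $v\le u$. $m_F:F\times F\to F$ is the componentwise binary meet $(x,y)\mapsto x\wedge y$ in $F(u)$ (the right adjoint of the diagonal). $\mu_F:F\times\mathbb{P}F\to\mathbb{P}F$ sends $(x,S)$, $x\in F(u)$, $S\in\mathbb{P}F(u)$, to the subsheaf of $F^u$ generated by the presheaf $v\mapsto\{x|_v\wedge y\mid y\in S(v)\}$, $v\le u$. *)

(* Defs.v *)
From Stdlib Require Import Classical ProofIrrelevance.
Set Implicit Arguments.
Unset Strict Implicit.

(** * Frames (= locales, identified with their frame of opens O(X)) *)
Record Frame := {
  O :> Type;
  ole : O -> O -> Prop;
  ojoin : (O -> Prop) -> O;
  omeet : O -> O -> O;
  ole_refl : forall a, ole a a;
  ole_trans : forall a b c, ole a b -> ole b c -> ole a c;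
  ole_antisym : forall a b, ole a b -> ole b a -> a = b;
  ojoin_ub : forall S a, S a -> ole a (ojoin S);
  ojoin_least : forall S b, (forall a, S a -> ole a b) -> ole (ojoin S) b;
  omeet_lb1 : forall a b, ole (omeet a b) a;
  omeet_lb2 : forall a b, ole (omeet a b) b;
  omeet_glb : forall a b c, ole c a -> ole c b -> ole c (omeet a b);
  odistr : forall a S,
    omeet a (ojoin S) = ojoin (fun c => exists s, S s /\ c = omeet a s)
}.

Definition fam_join (X : Frame) (I : Type) (f : I -> X) : X :=
  @ojoin X (fun c => exists i, c = f i).

Record Sheaf (X : Frame) := {
  sec :> X -> Type;
  res : forall u v : X, ole v u -> sec u -> sec v;
  res_id : forall (u : X) (h : ole u u) (x : sec u), res h x = x;
  res_comp : forall (u v w : X) (h1 : ole v u) (h2 : ole w v)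
      (h3 : ole w u) (x : sec u), res h2 (res h1 x) = res h3 x;
  sh_locality : forall (u : X) (I : Type) (ui : I -> X), u = fam_join ui ->
      forall x y : sec u,
      (forall i (h : ole (ui i) u), res h x = res h y) ->
      x = y;
  sh_gluing : forall (u : X) (I : Type) (ui : I -> X), u = fam_join ui ->
      forall s : forall i, sec (ui i),
      (forall i j (h1 : ole (omeet (ui i) (ui j)) (ui i))
                  (h2 : ole (omeet (ui i) (ui j)) (ui j)),
         res h1 (s i) = res h2 (s j)) ->
      exists x : sec u, forall i (h : ole (ui i) u), res h x = s i
}.

Record Posheaf (X : Frame) := {
  psh :> Sheaf X;
  ple : forall u : X, psh u -> psh u -> Prop;
  ple_refl : forall u (x : psh u), ple x x;
  ple_trans : forall u (x y z : psh u), ple x y -> ple y z -> ple x z;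
  ple_antisym : forall u (x y : psh u), ple x y -> ple y x -> x = y;
  res_mono : forall (u v : X) (h : ole v u) (x y : psh u),
      ple x y -> ple (res h x) (res h y);
  pos3 : forall (u : X) (I : Type) (ui : I -> X), u = fam_join ui ->
      forall s t : psh u,
      (forall i (h : ole (ui i) u), ple (res h s) (res h t)) ->
      ple s t
}.

(** * Complete posheaves: every F(u) a complete lattice (given by arbitrary
    infima), every restriction surjective with a left and a right adjoint. *)
Record CompletePosheaf (X : Frame) := {
  cpos :> Posheaf X;
  cinf : forall u : X, (cpos u -> Prop) -> cpos u;
  cinf_lb : forall u (S : cpos u -> Prop) x, S x -> ple (cinf S) x;
  cinf_glb : forall u (S : cpos u -> Prop) y,
      (forall x, S x -> ple y x) -> ple y (cinf S);
  res_surj : forall (u v : X) (h : ole v u) (y : cpos v),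
      exists x : cpos u, res h x = y;
  ladj : forall u v : X, ole v u -> cpos v -> cpos u;
  ladj_spec : forall (u v : X) (h : ole v u) (y : cpos v) (x : cpos u),
      ple (ladj h y) x <-> ple y (res h x);
  radj : forall u v : X, ole v u -> cpos v -> cpos u;
  radj_spec : forall (u v : X) (h : ole v u) (x : cpos u) (y : cpos v),
      ple (res h x) y <-> ple x (radj h y)
}.

Section Ops.
Variables (X : Frame) (F : CompletePosheaf X).

Definition cmeet (u : X) (x y : F u) : F u := cinf (fun z => z = x \/ z = y).

Definition cjoin (u : X) (S : F u -> Prop) : F u :=
  cinf (fun z => forall x, S x -> ple x z).

Definition is_frame_at (u : X) : Prop :=
  forall (x : F u) (S : F u -> Prop),
    cmeet x (cjoin S) = cjoin (fun c => exists y, S y /\ c = cmeet x y).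

(** S is a subsheaf of F^u (the restriction of F to the down-set of u);
    S v is only inhabited for v <= u. Elements of PF(u) are such S. *)
Definition is_subsheaf (u : X) (S : forall v : X, F v -> Prop) : Prop :=
  (forall v y, S v y -> ole v u) /\
  (forall (v w : X) (h : ole w v) (y : F v), S v y -> S w (res h y)) /\
  (forall (v : X) (I : Type) (vi : I -> X), ole v u -> v = fam_join vi ->
     forall y : F v,
     (forall i (h : ole (vi i) v), S (vi i) (res h y)) -> S v y).

Definition gen_subsheaf (u : X) (P : forall v : X, F v -> Prop)
  : forall v : X, F v -> Prop :=
  fun v y => ole v u /\
    forall T, is_subsheaf u T -> (forall w z, P w z -> T w z) -> T v y.

Definition muF (u : X) (x : F u) (S : forall v : X, F v -> Prop)
  : forall v : X, F v -> Prop :=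
  gen_subsheaf u (fun v z =>
     exists (h : ole v u) (y : F v), S v y /\ z = cmeet (res h x) y).

Definition supF (u : X) (S : forall v : X, F v -> Prop) : F u :=
  cinf (fun z : F u => forall (v : X) (h : ole v u) (y : F v),
          S v y -> ple y (res h z)).

End Ops.

Arguments cmeet {X} F u x y.
Arguments cjoin {X} F u S.
Arguments is_frame_at {X} F u.
Arguments is_subsheaf {X} F u S.
Arguments gen_subsheaf {X} F u P v y.
Arguments muF {X} F u x S v y.
Arguments supF {X} F u S.
Arguments ladj {X} c {u v} _ _.

(* Main.v *)
Require Import Defs.

Section H.
Variables (X : Frame) (F : CompletePosheaf X).

Lemma res_pi (u v : X) (h h' : ole v u) (x : F u) : res h x = res h' x.
Proof.
  rewrite <- (res_comp h (ole_refl v) h' x). symmetry; apply res_id.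
Qed.

Lemma le_ext (u : X) (a b : F u) :
  (forall z, ple a z <-> ple b z) -> a = b.
Proof.
  intros H. apply ple_antisym.
  - apply H. apply ple_refl.
  - apply H. apply ple_refl.
Qed.

Lemma cmeet_spec (u : X) (x y w : F u) :
  ple w (cmeet F u x y) <-> ple w x /\ ple w y.
Proof.
  unfold cmeet. split.
  - intros H. split; eapply ple_trans; try exact H; apply cinf_lb; auto.
  - intros [H1 H2]. apply cinf_glb. intros z [->| ->]; auto.
Qed.

Lemma cmeet_l (u : X) (x y : F u) : ple (cmeet F u x y) x.
Proof. unfold cmeet. apply cinf_lb. auto. Qed.
Lemma cmeet_r (u : X) (x y : F u) : ple (cmeet F u x y) y.
Proof. unfold cmeet. apply cinf_lb. auto. Qed.

Lemma cjoin_spec (u : X) (S : F u -> Prop) (z : F u) :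
  ple (cjoin F u S) z <-> (forall x, S x -> ple x z).
Proof.
  unfold cjoin. split.
  - intros H x Sx. eapply ple_trans; [|exact H]. apply cinf_glb. auto.
  - intros H. apply cinf_lb. exact H.
Qed.

Lemma ladj_spec' (u v : X) (h : ole v u) (y : F v) (z : F u) :
  ple (ladj F h y) z <-> ple y (res h z).
Proof. apply ladj_spec. Qed.

Lemma res_cmeet (u v : X) (h : ole v u) (x y : F u) :
  res h (cmeet F u x y) = cmeet F v (res h x) (res h y).
Proof.
  apply ple_antisym.
  - apply cmeet_spec. split; apply res_mono; [apply cmeet_l | apply cmeet_r].
  - apply ladj_spec. apply cmeet_spec. split; apply ladj_spec;
    [apply cmeet_l | apply cmeet_r].
Qed.

Definition UB (u : X) (S : forall v : X, F v -> Prop) (z : F u) : Prop :=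
  forall v (h : ole v u) y, S v y -> ple y (res h z).

Lemma supF_spec (u : X) S (z : F u) : ple (supF F u S) z <-> UB u S z.
Proof.
  unfold supF, UB. split.
  - intros H v h y Sy. apply ladj_spec. eapply ple_trans; [|exact H].
    apply cinf_glb. intros w Hw. apply ladj_spec. apply Hw. exact Sy.
  - intros H. apply cinf_lb. exact H.
Qed.

Lemma gen_sub (u : X) P : is_subsheaf F u (gen_subsheaf F u P).
Proof.
  unfold gen_subsheaf. split; [|split].
  - intros v y [H _]. exact H.
  - intros v w h y [Hv H]. split.
    + eapply ole_trans; eauto.
    + intros T HT HP. pose proof HT as HT0. destruct HT0 as [_ [HT1 _]]. apply HT1. apply H; auto.
  - intros v I vi Hv Hj y Hi. split; auto.
    intros T HT HP. pose proof HT as HT'. destruct HT' as [_ [_ HT3]].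
    apply (HT3 v I vi Hv Hj y). intros i h. apply (proj2 (Hi i h)); auto.
Qed.

Lemma UB_gen (u : X) P (z : F u) :
  (forall v w, P v w -> ole v u) ->
  UB u (gen_subsheaf F u P) z <-> UB u P z.
Proof.
  intros HP. unfold UB. split.
  - intros H v h y Py. apply H. split; [exact h|]. intros T _ HT. auto.
  - intros H v h y [Hv Hg].
    pose (T := fun w (s : F w) => ole w u /\ forall h' : ole w u, ple s (res h' z)).
    assert (HT : T v y).
    { apply Hg.
      - split; [|split].
        + intros w s [Hw _]; exact Hw.
        + intros a b hab s [Ha Hs]. split; [eapply ole_trans; eauto|].
          intros h'. rewrite <- (res_comp Ha hab h' z). apply res_mono. apply Hs.
        + intros a I ai Ha Hj s Hi. split; auto. intros h'.
          apply (pos3 Hj). intros i hi.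
          assert (hh : ole (ai i) u) by (eapply ole_trans; eauto).
          rewrite (res_comp h' hi hh z). apply (proj2 (Hi i hi)).
      - intros w s Ps. split; [eapply HP; eauto|]. intros h'. apply H. exact Ps. }
    apply (proj2 HT).
Qed.

Lemma UB_mu_gen (u : X) (x : F u) P (z : F u) :
  (forall v w, P v w -> ole v u) ->
  UB u (muF F u x (gen_subsheaf F u P)) z <->
  (forall v (h : ole v u) w, P v w -> ple (cmeet F v (res h x) w) (res h z)).
Proof.
  intros HP. unfold muF. rewrite UB_gen.
  2:{ intros v w [h _]; exact h. }
  unfold UB. split.
  - intros H v h w Pw. apply (H v h). exists h, w. split; auto.
    split; [exact h|]. intros T _ HT; auto.
  - intros H v h s [h0 [y [[Hv Hg] ->]]].
    pose (T := fun w (s : F w) => ole w u /\ forall h' : ole w u,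
                 ple (cmeet F w (res h' x) s) (res h' z)).
    assert (HT : T v y).
    { apply Hg.
      - split; [|split].
        + intros w s' [Hw _]; exact Hw.
        + intros a b hab s' [Ha Hs]. split; [eapply ole_trans; eauto|].
          intros h'. rewrite <- (res_comp Ha hab h' z).
          rewrite <- (res_comp Ha hab h' x). rewrite <- res_cmeet.
          apply res_mono. apply Hs.
        + intros a I ai Ha Hj s' Hi. split; auto. intros h'.
          apply (pos3 Hj). intros i hi.
          assert (hh : ole (ai i) u) by (eapply ole_trans; eauto).
          rewrite (res_comp h' hi hh z). rewrite res_cmeet.
          rewrite (res_comp h' hi hh x). apply (proj2 (Hi i hi)).
      - intros w s' Ps. split; [eapply HP; eauto|]. intros h'. apply H. exact Ps. }
    rewrite (res_pi _ _ h0 h x). apply (proj2 HT).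
Qed.

End H.

Theorem proposition3p7 (X : Frame) (F : CompletePosheaf X) :
  (forall (u : X) (x : F u) (S : forall v : X, F v -> Prop),
      is_subsheaf F u S ->
      supF F u (muF F u x S) = cmeet F u x (supF F u S))
  <->
  ((forall u : X, is_frame_at F u) /\
   (forall (u v : X) (h : ole v u) (x : F u) (y : F v),
      cmeet F u x (ladj F h y) = ladj F h (cmeet F v (res h x) y))).
Proof.
  split.
  - intros H1. split.
    + intros u x T. unfold is_frame_at.
      set (P := fun v (w : F v) => exists (h : ole v u) t, T t /\ w = res h t).
      assert (HP : forall v w, P v w -> ole v u) by (intros v w [h _]; exact h).
      assert (E1 : supF F u (gen_subsheaf F u P) = cjoin F u T).
      { apply le_ext. intros z. rewrite supF_spec, UB_gen by exact HP.
        rewrite cjoin_spec. unfold UB. split.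
        - intros H t Tt. specialize (H u (ole_refl u) t).
          rewrite res_id in H. apply H. exists (ole_refl u), t.
          split; auto. symmetry; apply res_id.
        - intros H v h' w [h [t [Tt ->]]]. rewrite (@res_pi X F _ _ h' h z).
          apply res_mono. auto. }
      assert (E2 : supF F u (muF F u x (gen_subsheaf F u P)) =
                   cjoin F u (fun c => exists y, T y /\ c = cmeet F u x y)).
      { apply le_ext. intros z. rewrite supF_spec, UB_mu_gen by exact HP.
        rewrite cjoin_spec. split.
        - intros H c [t [Tt ->]]. specialize (H u (ole_refl u) t).
          rewrite !res_id in H. apply H. exists (ole_refl u), t.
          split; auto. symmetry; apply res_id.
        - intros H v h' w [h [t [Tt ->]]]. rewrite (@res_pi X F _ _ h' h z).
          rewrite (@res_pi X F _ _ h' h x). rewrite <- res_cmeet.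
          apply res_mono. apply H. eauto. }
      rewrite <- E1, <- E2. symmetry. apply H1. apply gen_sub.
    + intros u v h x y.
      set (P := fun w (s : F w) => exists (hw : ole w v), s = res hw y).
      assert (HP : forall w s, P w s -> ole w u)
        by (intros w s [hw _]; eapply ole_trans; eauto).
      assert (E1 : supF F u (gen_subsheaf F u P) = ladj F h y).
      { apply le_ext. intros z. rewrite supF_spec, UB_gen by exact HP.
        rewrite ladj_spec. unfold UB. split.
        - intros H. apply (H v h y). exists (ole_refl v). symmetry; apply res_id.
        - intros H w h' s [hw ->]. rewrite <- (res_comp h hw h' z).
          apply res_mono. exact H. }
      assert (E2 : supF F u (muF F u x (gen_subsheaf F u P)) =
                   ladj F h (cmeet F v (res h x) y)).
      { apply le_ext. intros z. rewrite supF_spec, UB_mu_gen by exact HP.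
        rewrite ladj_spec. split.
        - intros H. apply (H v h y). exists (ole_refl v). symmetry; apply res_id.
        - intros H w h' s [hw ->]. rewrite <- (res_comp h hw h' z).
          rewrite <- (res_comp h hw h' x). rewrite <- res_cmeet.
          apply res_mono. exact H. }
      rewrite <- E1, <- E2. symmetry. apply H1. apply gen_sub.
  - intros [Hfr Hl] u x S _.
    set (Q := fun q : F u => exists v (h : ole v u) y, S v y /\ q = ladj F h y).
    assert (E1 : supF F u S = cjoin F u Q).
    { apply le_ext. intros z. rewrite supF_spec, cjoin_spec. unfold UB. split.
      - intros H q [v [h [y [Sy ->]]]]. apply ladj_spec. auto.
      - intros H v h y Sy. apply ladj_spec. apply H. exists v, h, y. auto. }
    rewrite E1, (Hfr u x Q). apply le_ext. intros z.
    unfold muF. rewrite supF_spec, UB_gen.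
    2:{ intros v w [h _]; exact h. }
    rewrite cjoin_spec. unfold UB. split.
    + intros H c [q [[v [h [y [Sy ->]]]] ->]]. rewrite Hl. apply ladj_spec.
      apply H. exists h, y. auto.
    + intros H v h' w [h [y [Sy ->]]]. rewrite (@res_pi X F _ _ h' h z).
      apply ladj_spec. rewrite <- Hl. apply H. exists (ladj F h y). split; auto.
      exists v, h, y. auto.
Qed.
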